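(* Suppose one of the following holds: (i) $\mathcal{X}$ is compact and the state-space system defined by $f$ has the echo state property; or (ii) $f$ is a contraction in the first entry with a rate $c\in(0,|\mathbf{w}|^{-1})$, that is, $d_{\mathcal{X}}(f(x_1,u),f(x_2,u))\le c\,d_{\mathcal{X}}(x_1,x_2)$ for all $x_1,x_2\in\mathcal{X}$ and $u\in\mathcal{U}$. Then the associated filter $U_f$ exists as a map $U_f:\underline{\mathcal{U}}\to\underline{\mathcal{X}}$ and is continuous.
   Context: $\mathbb{Z}_-=\{\dots,-2,-1\}$; $\mathbb{N}=\{1,2,\dots\}$. $\mathcal{Z},\mathcal{U}$ Polish; $(\mathcal{X},d_{\mathcal{X}})$ Polish with complete metric; $f:\mathcal{X}\times\mathcal{U}\to\mathcal{X}$ continuous. $\underline{\mathcal{Z}}=\mathcal{Z}^{\mathbb{Z}_-}$ (product topology); $V:\underline{\mathcal{Z}}\to\mathcal{U}^{\mathbb{Z}_-}$ continuous and causal; $\underline{\mathcal{U}}=V(\underline{\mathcal{Z}})$ Polish with a metric $d_{\underline{\mathcal{U}}}$ inducing its topology. $\mathbf{w}=(w_t)_{t\le-1}\subseteq(0,1)$ monotone, summing to $1$, $|\mathbf{w}|:=\sup_{n\in\mathbb{N}}(\sup_tw_t/w_{t-n})^{1/n}<\infty$. Fix $x_*\in\mathcal{X}$. $\underline{\mathcal{X}}=\{\mathbf{x}\in\mathcal{X}^{\mathbb{Z}_-}:\sum_tw_td_{\mathcal{X}}(x_t,x_* )<\infty\}$ with metric $d_{\underline{\mathcal{X}}}(\mathbf{x}^1,\mathbf{x}^2)=\sum_tw_td_{\mathcal{X}}(x^1_t,x^2_t)$.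 $F(\mathbf{x},\mathbf{u})_t=f(x_{t-1},u_t)$ for $\mathbf{x}\in\mathcal{X}^{\mathbb{Z}_-},\mathbf{u}\in\mathcal{U}^{\mathbb{Z}_-}$; standing assumption: $F(\underline{\mathcal{X}}\times\underline{\mathcal{U}})\subseteq\underline{\mathcal{X}}$ and $F:\underline{\mathcal{X}}\times\underline{\mathcal{U}}\to\underline{\mathcal{X}}$ is continuous. Echo state property: for every $\mathbf{u}\in\mathcal{U}^{\mathbb{Z}_-}$ there is a unique $\mathbf{x}\in\mathcal{X}^{\mathbb{Z}_-}$ with $\mathbf{x}=F(\mathbf{x},\mathbf{u})$; the associated filter $U_f$ maps $\mathbf{u}$ to this unique solution $\mathbf{x}$ (on whichever set of inputs the solution exists and is unique; in case (ii) the conclusion includes that for each $\mathbf{u}\in\underline{\mathcal{U}}$ there is a unique solution $\mathbf{x}\in\underline{\mathcal{X}}$). *)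

(* Defs.v *)
From HB Require Import structures.
From mathcomp Require Import all_boot all_order all_algebra.
From mathcomp Require Import all_classical all_reals all_analysis.
Set Implicit Arguments. Unset Strict Implicit. Unset Printing Implicit Defensive.
Import Order.TTheory GRing.Theory Num.Theory.
Import numFieldNormedType.Exports.
Local Open Scope classical_set_scope.
Local Open Scope ring_scope.

(* Time index convention: Z_- = {..,-2,-1} is encoded by nat, with
   t = -(n+1) <-> n.  Hence x_{t-1} <-> x (n.+1) and "s <= t" <-> "n <= m". *)

Section Defs.
Variable R : realType.

Definition metric_on (T : Type) (A : set T) (d : T -> T -> R) :=
  forall x y z, A x -> A y -> A z ->
    [/\ 0 <= d x y, d x y = 0 <-> x = y, d x y = d y x
      & d x z <= d x y + d y z].

Definition induces_on (T : topologicalType) (A : set T) (d : T -> T -> R) :=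
  forall x, A x -> forall B : set T,
    ((exists2 N, nbhs x N & N `&` A `<=` B) <->
     (exists2 e : R, 0 < e & [set y | A y /\ d x y < e] `<=` B)).

Definition complete_on (T : Type) (A : set T) (d : T -> T -> R) :=
  forall s : nat -> T, (forall n, A (s n)) ->
    (forall e : R, 0 < e -> exists N : nat, forall m n,
        (N <= m)%N -> (N <= n)%N -> d (s m) (s n) < e) ->
    exists2 l, A l & (fun n => d (s n) l) @ \oo --> (0 : R).

Definition separable_on (T : topologicalType) (A : set T) :=
  exists2 D : set T, D `<=` A /\ countable D &
    forall x, A x -> forall N, nbhs x N -> exists y, D y /\ N y.

Definition polish_on (T : topologicalType) (A : set T) :=
  exists d : T -> T -> R,
    [/\ metric_on A d, induces_on A d, complete_on A d & separable_on A].

Definition polish (T : topologicalType) := polish_on [set: T].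

(* |w| = sup_{n >= 1} (sup_t w_t / w_{t-n})^{1/n} *)
Definition wratios (w : nat -> R) (n : nat) : set R :=
  [set w k / w (k + n)%N | k in [set: nat]].
Definition wroots (w : nat -> R) : set R :=
  [set (sup (wratios w n)) `^ (n%:R^-1) | n in [set n : nat | (0 < n)%N]].
Definition wnorm (w : nat -> R) : R := sup (wroots w).
Definition wnorm_finite (w : nat -> R) :=
  (forall n, (0 < n)%N -> has_ubound (wratios w n)) /\ has_ubound (wroots w).

Definition in_Xbar (X : Type) (w : nat -> R) (d : X -> X -> R) (xs : X)
  (x : nat -> X) :=
  exists l : R, series (fun n => w n * d (x n) xs) @ \oo --> l.

Definition dXbar (X : Type) (w : nat -> R) (d : X -> X -> R)
  (x1 x2 : nat -> X) : R :=
  limn (series (fun n => w n * d (x1 n) (x2 n))).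

End Defs.

Definition Fmap (X U : Type) (f : X -> U -> X) (x : nat -> X) (u : nat -> U)
  : nat -> X := fun n => f (x n.+1) (u n).

Definition causal (Z U : Type) (V : (nat -> Z) -> (nat -> U)) :=
  forall z z' n, (forall m, (n <= m)%N -> z m = z' m) -> V z n = V z' n.

(* Main.v *)
Require Import Defs.
From HB Require Import structures.
From mathcomp Require Import all_boot all_order all_algebra.
From mathcomp Require Import all_classical all_reals all_analysis.
From mathcomp Require Import ring lra.
Import Order.TTheory GRing.Theory Num.Theory.
Import numFieldNormedType.Exports.
Local Open Scope classical_set_scope.
Local Open Scope ring_scope.
Set Implicit Arguments. Unset Strict Implicit.


Lemma ser_nd (R : realType) (a : nat -> R) : (forall n, 0 <= a n) ->
  {homo series a : m n / (m <= n)%N >-> m <= n}.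
Proof.
move=> a0 m n mn; rewrite !seriesEnat /=.
exact: (@nondecreasing_series R a xpredT 0%N (fun k _ _ => a0 k)).
Qed.

Lemma ser_ub (R : realType) (a : nat -> R) B : (forall n, 0 <= a n) ->
  (forall N, series a N <= B) -> cvgn (series a) /\ limn (series a) <= B.
Proof.
move=> a0 aB.
have c : cvgn (series a).
  apply: nondecreasing_is_cvgn; first exact: ser_nd.
  by exists B => y [n _ <-].
split => //; apply: limr_le => //; exact: nearW.
Qed.

Lemma ser_le_lim (R : realType) (a : nat -> R) : (forall n, 0 <= a n) ->
  cvgn (series a) -> forall N, series a N <= limn (series a).
Proof. by move=> a0 c N; apply: nondecreasing_cvgn_le => //; exact: ser_nd. Qed.

Lemma geom0 (R : realType) (l K a : R) : 0 <= l < 1 ->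
  (forall k, a <= K * l ^+ k) -> a <= 0.
Proof.
move=> /andP[l0 l1] H.
have : (fun k => K * l ^+ k) @ \oo --> K * 0.
  apply: cvgMr; apply: cvg_expr; rewrite ger0_norm //.
rewrite mulr0 => c.
apply: (cvgr_to_ge c); exact: nearW.
Qed.



Lemma d_ge0 (R : realType) (X : Type) (d : X -> X -> R) :
  metric_on [set: X] d -> forall x y, 0 <= d x y.
Proof. by move=> hm x y; have [] := hm x y y I I I. Qed.
Lemma d_eq0 (R : realType) (X : Type) (d : X -> X -> R) :
  metric_on [set: X] d -> forall x y, d x y = 0 <-> x = y.
Proof. by move=> hm x y; have [] := hm x y y I I I. Qed.
Lemma d_sym (R : realType) (X : Type) (d : X -> X -> R) :
  metric_on [set: X] d -> forall x y, d x y = d y x.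
Proof. by move=> hm x y; have [] := hm x y y I I I. Qed.
Lemma d_tri (R : realType) (X : Type) (d : X -> X -> R) :
  metric_on [set: X] d -> forall x y z, d x z <= d x y + d y z.
Proof. by move=> hm x y z; have [] := hm x y z I I I. Qed.
Lemma d_xx (R : realType) (X : Type) (d : X -> X -> R) :
  metric_on [set: X] d -> forall x, d x x = 0.
Proof. by move=> hm x; apply/(d_eq0 hm). Qed.

Definition PS (R : realType) (X : Type) (w : nat -> R) (d : X -> X -> R)
  (x y : nat -> X) N := series (fun n => w n * d (x n) (y n)) N.

Lemma PS_ge0_term (R : realType) (X : Type) (w : nat -> R) (d : X -> X -> R) x y :
  metric_on [set: X] d -> (forall n, 0 < w n) ->
  forall n, 0 <= w n * d (x n) (y n).
Proof. by move=> hm w0 n; apply: mulr_ge0; [exact: ltW | exact: d_ge0]. Qed.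

Lemma PS_nd (R : realType) (X : Type) (w : nat -> R) (d : X -> X -> R) x y :
  metric_on [set: X] d -> (forall n, 0 < w n) ->
  forall M N, (M <= N)%N -> PS w d x y M <= PS w d x y N.
Proof. by move=> hm w0 M N; apply: ser_nd; exact: PS_ge0_term. Qed.

Lemma PS_tri (R : realType) (X : Type) (w : nat -> R) (d : X -> X -> R) x y z N :
  metric_on [set: X] d -> (forall n, 0 < w n) ->
  PS w d x z N <= PS w d x y N + PS w d y z N.
Proof.
move=> hm w0; rewrite /PS /series /= -big_split /=.
apply: ler_sum => i _; rewrite -mulrDr; apply: ler_wpM2l; [exact: ltW | exact: d_tri].
Qed.

Lemma PS_sym (R : realType) (X : Type) (w : nat -> R) (d : X -> X -> R) x y N :
  metric_on [set: X] d -> PS w d x y N = PS w d y x N.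
Proof.
move=> hm; rewrite /PS /series /=; apply: eq_bigr => i _; by rewrite (d_sym hm).
Qed.

Lemma Xbar_bnd (R : realType) (X : Type) (w : nat -> R) (d : X -> X -> R) xs x :
  metric_on [set: X] d -> (forall n, 0 < w n) ->
  in_Xbar w d xs x <-> exists B, forall N, PS w d x (fun=> xs) N <= B.
Proof.
move=> hm w0; split.
  move=> [l hl]; have c : cvgn (series (fun n => w n * d (x n) xs)) by apply/cvg_ex; exists l.
  exists (limn (series (fun n => w n * d (x n) xs))) => N.
  by apply: ser_le_lim => // n; apply: mulr_ge0; [exact: ltW | exact: d_ge0].
move=> [B hB]; have [c _] := @ser_ub R (fun n => w n * d (x n) xs) B
  (fun n => mulr_ge0 (ltW (w0 n)) (d_ge0 hm _ _)) hB.
by exists (limn (series (fun n => w n * d (x n) xs))).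
Qed.

Lemma D_cvg (R : realType) (X : Type) (w : nat -> R) (d : X -> X -> R) xs x y :
  metric_on [set: X] d -> (forall n, 0 < w n) ->
  in_Xbar w d xs x -> in_Xbar w d xs y ->
  cvgn (series (fun n => w n * d (x n) (y n))).
Proof.
move=> hm w0 /(Xbar_bnd _ _ hm w0) [Bx hx] /(Xbar_bnd _ _ hm w0) [By hy].
have [] // := @ser_ub R (fun n => w n * d (x n) (y n)) (Bx + By)
  (fun n => mulr_ge0 (ltW (w0 n)) (d_ge0 hm _ _)).
move=> N; apply: le_trans (PS_tri _ (fun=> xs) _ _ hm w0) _.
by rewrite (PS_sym _ (fun=> xs)) // lerD.
Qed.

Lemma PS_le_D (R : realType) (X : Type) (w : nat -> R) (d : X -> X -> R) xs x y :
  metric_on [set: X] d -> (forall n, 0 < w n) ->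
  in_Xbar w d xs x -> in_Xbar w d xs y -> forall N, PS w d x y N <= dXbar w d x y.
Proof.
move=> hm w0 hx hy N; apply: ser_le_lim; first exact: PS_ge0_term.
exact: D_cvg hx hy.
Qed.

Lemma D_le (R : realType) (X : Type) (w : nat -> R) (d : X -> X -> R) x y B :
  metric_on [set: X] d -> (forall n, 0 < w n) ->
  (forall N, PS w d x y N <= B) -> dXbar w d x y <= B.
Proof.
by move=> hm w0 hB; have [] := @ser_ub R _ B (fun n => mulr_ge0 (ltW (w0 n)) (d_ge0 hm _ _)) hB.
Qed.

Lemma D_xx (R : realType) (X : Type) (w : nat -> R) (d : X -> X -> R) x :
  metric_on [set: X] d -> (forall n, 0 < w n) -> dXbar w d x x = 0.
Proof.
move=> hm w0; apply/eqP; rewrite eq_le; apply/andP; split.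
  apply: D_le => // N; rewrite /PS /series /= big1 // => i _.
  by rewrite (d_xx hm) mulr0.
rewrite /dXbar; apply: limr_ge.
  have [] // := @ser_ub R (fun n => w n * d (x n) (x n)) 0 (fun n => mulr_ge0 (ltW (w0 n)) (d_ge0 hm _ _)).
  move=> N; rewrite /series /= big1 // => i _; by rewrite (d_xx hm) mulr0.
apply: nearW => N; apply: sumr_ge0 => i _; apply: mulr_ge0; [exact: ltW | exact: d_ge0].
Qed.

Lemma Xbar_cst (R : realType) (X : Type) (w : nat -> R) (d : X -> X -> R) xs :
  metric_on [set: X] d -> (forall n, 0 < w n) -> in_Xbar w d xs (fun=> xs).
Proof.
move=> hm w0; apply/(Xbar_bnd _ _ hm w0); exists 0 => N.
rewrite /PS /series /= big1 // => i _; by rewrite (d_xx hm) mulr0.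
Qed.



Lemma wnorm_ratio (R : realType) (w : nat -> R) :
  (forall n, 0 < w n) -> wnorm_finite w ->
  0 < wnorm w /\ forall k, w k <= wnorm w * w k.+1.
Proof.
move=> w0 [hr hro].
have s1 : forall k, w k / w k.+1 <= sup (wratios w 1).
  move=> k; apply: sup_upper_bound; last by exists k => //; rewrite addn1.
  by split; [exists (w 0%N / w 1%N); exists 0%N | exact: hr].
have s0 : 0 < sup (wratios w 1).
  apply: lt_le_trans (s1 0%N); by rewrite divr_gt0.
have s2 : sup (wratios w 1) <= wnorm w.
  apply: sup_upper_bound; last by exists 1%N => //; rewrite invr1 powRr1 // ltW.
  split => //; exists (sup (wratios w 1) `^ (1%:R^-1)); by exists 1%N.
split; first exact: lt_le_trans s2.
move=> k; have := le_trans (s1 k) s2.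
by rewrite ler_pdivrMr // mulrC.
Qed.

Lemma w_sum_le1 (R : realType) (w : nat -> R) :
  (forall n, 0 < w n) -> series w @ \oo --> (1 : R) -> forall N, series w N <= 1.
Proof.
move=> w0 hw N.
have c : cvgn (series w) by apply/cvg_ex; exists 1.
have := ser_le_lim (fun n => ltW (w0 n)) c N.
by rewrite (cvg_lim _ hw).
Qed.



Lemma geom_bound (R : realType) (T : Type) (dd : T -> T -> R) (s : nat -> T) A l :
  0 <= l < 1 -> 0 <= A ->
  (forall i j k, dd (s i) (s k) <= dd (s i) (s j) + dd (s j) (s k)) ->
  (forall i, dd (s i) (s i.+1) <= A * l ^+ i) ->
  forall k m, (k < m)%N -> dd (s k) (s m) <= A * l ^+ k / (1 - l).
Proof.
move=> /andP[l0 l1] A0 tri st.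
have l1' : 0 < 1 - l by rewrite subr_gt0.
have H : forall k j, dd (s k) (s (k + j).+1) <= A * (l ^+ k - l ^+ (k + j).+1) / (1 - l).
  move=> k; elim=> [|j IH].
    rewrite addn0 exprS.
    have -> : A * (l ^+ k - l * l ^+ k) / (1 - l) = A * l ^+ k.
      by field; rewrite subr_eq0 eq_sym lt_eqF.
    exact: st.
  rewrite addnS.
  apply: le_trans (tri k (k + j).+1 (k + j).+2) _.
  apply: le_trans (lerD IH (st _)) _.
  rewrite le_eqVlt; apply/orP; left; apply/eqP.
  rewrite [in RHS]exprS.
  by field; rewrite subr_eq0 eq_sym lt_eqF.
move=> k m km; have -> : m = (k + (m - k).-1).+1.
  by rewrite -addnS prednK ?subn_gt0 // subnKC // ltnW.
apply: le_trans (H _ _) _.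
rewrite ler_pdivrMr // divfK ?lt0r_neq0 //.
rewrite ler_wpM2l // lerBlDr lerDl; exact: exprn_ge0.
Qed.

Lemma geom_lim (R : realType) (X : Type) (d : X -> X -> R) (s : nat -> X) A l :
  metric_on [set: X] d -> complete_on [set: X] d ->
  0 <= l < 1 -> 0 <= A ->
  (forall i, d (s i) (s i.+1) <= A * l ^+ i) ->
  exists x, forall k, d (s k) x <= A * l ^+ k / (1 - l).
Proof.
move=> hm hc hl A0 st.
have /andP[l0 l1] := hl.
have l1' : 0 < 1 - l by rewrite subr_gt0.
have gb := geom_bound hl A0 (fun i j k => d_tri hm (s i) (s j) (s k)) st.
have gb' : forall k m, (k <= m)%N -> d (s k) (s m) <= A * l ^+ k / (1 - l).
  move=> k m; rewrite leq_eqVlt => /orP[/eqP <-|/gb //].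
  rewrite (d_xx hm); apply: divr_ge0; last exact: ltW.
  by apply: mulr_ge0 => //; exact: exprn_ge0.
have cv : (fun k => A / (1 - l) * l ^+ k) @ \oo --> A / (1 - l) * 0.
  by apply: cvgMr; apply: cvg_expr; rewrite ger0_norm.
rewrite mulr0 in cv.
have [x _ hx] : exists2 x, [set: X] x & (fun n => d (s n) x) @ \oo --> (0 : R).
  apply: hc => // e e0.
  have [N _ HN] := @cvgr_lt R _ _ _ _ _ cv _ (divr_gt0 e0 (ltr0Sn _ 1%N)).
  exists N => m n Nm Nn.
  apply: le_lt_trans (d_tri hm _ (s N) _) _.
  rewrite (d_sym hm (s m)) (splitr e); apply: ltrD.
    apply: le_lt_trans (gb' _ _ Nm) _; rewrite mulrAC; by apply: HN => /=.
  apply: le_lt_trans (gb' _ _ Nn) _; rewrite mulrAC; by apply: HN => /=.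
exists x => k.
have cv2 : (fun j => A * l ^+ k / (1 - l) + d (s j) x) @ \oo --> A * l ^+ k / (1 - l) + 0.
  by apply: cvgD => //; exact: cvg_cst.
rewrite addr0 in cv2; apply: (cvgr_to_ge cv2).
exists k => // j /= kj.
apply: le_trans (d_tri hm _ (s j) _) _; rewrite lerD2r; exact: gb'.
Qed.



Lemma PS_F (R : realType) (X U : Type) (d : X -> X -> R) (f : X -> U -> X)
  (w : nat -> R) c L u x y N :
  metric_on [set: X] d -> (forall n, 0 < w n) -> 0 <= c -> 0 <= L ->
  (forall k, w k <= L * w k.+1) ->
  (forall x1 x2 u, d (f x1 u) (f x2 u) <= c * d x1 x2) ->
  PS w d (Fmap f x u) (Fmap f y u) N <= c * L * PS w d x y N.+1.
Proof.
move=> hm w0 c0 L0 wL hcon.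
rewrite /PS /series /= big_nat_recl // /Fmap.
apply: (@le_trans _ _ (c * L * \sum_(0 <= i < N) (w i.+1 * d (x i.+1) (y i.+1)))).
  rewrite mulr_sumr; apply: ler_sum => i _.
  apply: le_trans (ler_wpM2l (ltW (w0 i)) (hcon _ _ _)) _.
  rewrite mulrC; apply: le_trans (ler_wpM2l _ (wL i)) _.
    by apply: mulr_ge0 => //; exact: d_ge0.
  rewrite le_eqVlt; apply/orP; left; apply/eqP; ring.
apply: ler_wpM2l; first exact: mulr_ge0.
rewrite lerDr; apply: mulr_ge0; [exact: ltW | exact: d_ge0].
Qed.

Lemma D_tri (R : realType) (X : Type) (w : nat -> R) (d : X -> X -> R) xs x y z :
  metric_on [set: X] d -> (forall n, 0 < w n) ->
  in_Xbar w d xs x -> in_Xbar w d xs y -> in_Xbar w d xs z ->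
  dXbar w d x z <= dXbar w d x y + dXbar w d y z.
Proof.
move=> hm w0 hx hy hz; apply: D_le => // N.
apply: le_trans (PS_tri _ y _ _ hm w0) _.
apply: lerD; [exact: (PS_le_D hm w0 hx hy) | exact: (PS_le_D hm w0 hy hz)].
Qed.

Lemma D_sym (R : realType) (X : Type) (w : nat -> R) (d : X -> X -> R) x y :
  metric_on [set: X] d -> dXbar w d x y = dXbar w d y x.
Proof.
move=> hm; rewrite /dXbar; congr (limn _); apply: funext => N.
exact: (PS_sym _ _ _ _ hm).
Qed.

Lemma D_F (R : realType) (X U : Type) (d : X -> X -> R) (f : X -> U -> X)
  (w : nat -> R) xs c L u x y :
  metric_on [set: X] d -> (forall n, 0 < w n) -> 0 <= c -> 0 <= L ->
  (forall k, w k <= L * w k.+1) ->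
  (forall x1 x2 u, d (f x1 u) (f x2 u) <= c * d x1 x2) ->
  in_Xbar w d xs x -> in_Xbar w d xs y ->
  dXbar w d (Fmap f x u) (Fmap f y u) <= c * L * dXbar w d x y.
Proof.
move=> hm w0 c0 L0 wL hcon hx hy; apply: D_le => // N.
apply: le_trans (PS_F _ _ _ _ hm w0 c0 L0 wL hcon) _.
apply: ler_wpM2l; [exact: mulr_ge0 | exact: (PS_le_D hm w0 hx hy)].
Qed.

Lemma D_ge0 (R : realType) (X : Type) (w : nat -> R) (d : X -> X -> R) xs x y :
  metric_on [set: X] d -> (forall n, 0 < w n) ->
  in_Xbar w d xs x -> in_Xbar w d xs y -> 0 <= dXbar w d x y.
Proof.
move=> hm w0 hx hy; apply: (le_trans _ (PS_le_D hm w0 hx hy 0%N)).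
by rewrite /PS /series /= big_geq.
Qed.

Lemma D_eq0 (R : realType) (X : Type) (w : nat -> R) (d : X -> X -> R) xs x y :
  metric_on [set: X] d -> (forall n, 0 < w n) ->
  in_Xbar w d xs x -> in_Xbar w d xs y -> dXbar w d x y <= 0 -> x = y.
Proof.
move=> hm w0 hx hy h; apply: funext => n; apply/(d_eq0 hm).
apply/eqP; rewrite eq_le (d_ge0 hm) andbT.
have : w n * d (x n) (y n) <= 0.
  apply: (le_trans _ h); apply: (le_trans _ (PS_le_D hm w0 hx hy n.+1)).
  rewrite /PS seriesSr lerDr; apply: sumr_ge0 => i _.
  apply: mulr_ge0; [exact: ltW | exact: d_ge0].
by rewrite pmulr_rle0.
Qed.



Lemma term_le_D (R : realType) (X : Type) (w : nat -> R) (d : X -> X -> R) xs x y n :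
  metric_on [set: X] d -> (forall n, 0 < w n) ->
  in_Xbar w d xs x -> in_Xbar w d xs y -> w n * d (x n) (y n) <= dXbar w d x y.
Proof.
move=> hm w0 hx hy; apply: (le_trans _ (PS_le_D hm w0 hx hy n.+1)).
rewrite /PS seriesSr lerDr; apply: sumr_ge0 => i _.
apply: mulr_ge0; [exact: ltW | exact: d_ge0].
Qed.

Lemma fp_exists (R : realType) (X U : Type) (d : X -> X -> R) (f : X -> U -> X)
  (w : nat -> R) xs c L u :
  metric_on [set: X] d -> complete_on [set: X] d -> (forall n, 0 < w n) ->
  0 <= c -> 0 <= L -> c * L < 1 ->
  (forall k, w k <= L * w k.+1) ->
  (forall x1 x2 u, d (f x1 u) (f x2 u) <= c * d x1 x2) ->
  (forall x, in_Xbar w d xs x -> in_Xbar w d xs (Fmap f x u)) ->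
  exists x, in_Xbar w d xs x /\ x = Fmap f x u.
Proof.
move=> hm hc w0 c0 L0 lam1 wL hcon hF.
pose F := fun x => Fmap f x u.
pose xk := fun k => iter k F (fun=> xs).
have Xk : forall k, in_Xbar w d xs (xk k).
  elim=> [|k IH]; first exact: Xbar_cst.
  exact: hF.
pose lam := c * L.
have lam0 : 0 <= lam by exact: mulr_ge0.
have hl : 0 <= lam < 1 by rewrite lam0 lam1.
have lam1' : 0 < 1 - lam by rewrite subr_gt0.
pose D1 := dXbar w d (xk 1%N) (xk 0%N).
have D10 : 0 <= D1 by exact: (D_ge0 hm w0 (Xk _) (Xk _)).
have Dk : forall k, dXbar w d (xk k.+1) (xk k) <= D1 * lam ^+ k.
  elim=> [|k IH]; first by rewrite expr0 mulr1.
  have H := @D_F R X U d f w xs c L u _ _ hm w0 c0 L0 wL hcon (Xk k.+1) (Xk k).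
  apply: le_trans H _.
  rewrite exprS mulrCA; exact: ler_wpM2l.
have pk : forall n k, d (xk k n) (xk k.+1 n) <= (D1 / w n) * lam ^+ k.
  move=> n k; rewrite mulrAC ler_pdivlMr // mulrC (d_sym hm).
  apply: le_trans (Dk k); exact: term_le_D.
have /choice [x hx] : forall n, exists l, forall k,
    d (xk k n) l <= (D1 / w n) * lam ^+ k / (1 - lam).
  move=> n; apply: (geom_lim hm hc hl _ (pk n)).
  by apply: divr_ge0 => //; exact: ltW.
have fx : x = Fmap f x u.
  apply: funext => n; apply/(d_eq0 hm).
  apply/eqP; rewrite eq_le (d_ge0 hm) andbT.
  apply: (@geom0 _ lam ((D1 / w n * lam + c * (D1 / w n.+1)) / (1 - lam))) => // k.
  apply: le_trans (d_tri hm _ (xk k.+1 n) _) _.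
  rewrite (d_sym hm (x n)).
  have -> : xk k.+1 n = f (xk k n.+1) (u n) by [].
  apply: le_trans (lerD (hx n k.+1) (le_trans (hcon _ _ _) (ler_wpM2l c0 (hx n.+1 k)))) _.
  rewrite le_eqVlt; apply/orP; left; apply/eqP.
  rewrite exprS; field.
  by rewrite subr_eq0 eq_sym lt_eqF // !lt0r_neq0.
exists x; split => //.
apply/(Xbar_bnd _ _ hm w0); exists (D1 / (1 - lam)) => N.
rewrite -subr_le0.
apply: (@geom0 _ lam (N%:R * (D1 / (1 - lam)))) => // k.
rewrite lerBlDr.
apply: le_trans (PS_tri _ (xk k) _ _ hm w0) _.
apply: lerD.
  rewrite /PS /series /=.
  apply: (@le_trans _ _ (\sum_(0 <= i < N) (D1 / (1 - lam) * lam ^+ k))).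
    apply: ler_sum => i _; rewrite (d_sym hm).
    apply: le_trans (ler_wpM2l (ltW (w0 i)) (hx i k)) _.
    rewrite le_eqVlt; apply/orP; left; apply/eqP.
    field; apply/andP; split; [by rewrite subr_eq0 eq_sym lt_eqF | exact: lt0r_neq0].
  rewrite sumr_const_nat subn0 -mulr_natl le_eqVlt; apply/orP; left; apply/eqP; ring.
have st : forall i, dXbar w d (xk i) (xk i.+1) <= D1 * lam ^+ i.
  by move=> i; rewrite (D_sym _ _ _ hm); exact: Dk.
have gb := geom_bound hl D10 (fun i j l => D_tri hm w0 (Xk i) (Xk j) (Xk l)) st.
apply: le_trans (PS_le_D hm w0 (Xk k) (Xk 0%N) N) _.
case: k => [|k]; first by rewrite (D_xx _ hm w0) divr_ge0 // ltW.
rewrite (D_sym _ _ _ hm); apply: le_trans (gb 0%N k.+1 isT) _.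
by rewrite expr0 mulr1.
Qed.



Lemma fp_unique (R : realType) (X U : Type) (d : X -> X -> R) (f : X -> U -> X)
  (w : nat -> R) xs c L u x y :
  metric_on [set: X] d -> (forall n, 0 < w n) ->
  0 <= c -> 0 <= L -> c * L < 1 ->
  (forall k, w k <= L * w k.+1) ->
  (forall x1 x2 u, d (f x1 u) (f x2 u) <= c * d x1 x2) ->
  in_Xbar w d xs x -> in_Xbar w d xs y ->
  x = Fmap f x u -> y = Fmap f y u -> x = y.
Proof.
move=> hm w0 c0 L0 lam1 wL hcon hx hy ex ey.
apply: (D_eq0 hm w0 hx hy).
have h := @D_F R X U d f w xs c L u x y hm w0 c0 L0 wL hcon hx hy.
rewrite -ex -ey in h.
have : (1 - c * L) * dXbar w d x y <= 0 by rewrite mulrBl mul1r subr_le0.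
by rewrite pmulr_rle0 // subr_gt0.
Qed.

Lemma fp_cont (R : realType) (X U : Type) (d : X -> X -> R) (f : X -> U -> X)
  (w : nat -> R) xs c L u u0 x x0 e :
  metric_on [set: X] d -> (forall n, 0 < w n) ->
  0 <= c -> 0 <= L -> c * L < 1 ->
  (forall k, w k <= L * w k.+1) ->
  (forall x1 x2 u, d (f x1 u) (f x2 u) <= c * d x1 x2) ->
  in_Xbar w d xs x -> in_Xbar w d xs x0 -> in_Xbar w d xs (Fmap f x0 u) ->
  x = Fmap f x u -> x0 = Fmap f x0 u0 ->
  dXbar w d (Fmap f x0 u) (Fmap f x0 u0) < e ->
  dXbar w d x x0 <= e / (1 - c * L).
Proof.
move=> hm w0 c0 L0 lam1 wL hcon hx hx0 hx0u ex ex0 he.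
have h := @D_F R X U d f w xs c L u x x0 hm w0 c0 L0 wL hcon hx hx0.
have t := D_tri hm w0 hx hx0u hx0.
rewrite -ex in h.
rewrite ler_pdivlMr ?subr_gt0 // mulrBr mulr1 lerBlDr.
rewrite -ex0 in he.
apply: le_trans t _; rewrite addrC mulrC; apply: lerD => //; exact: ltW.
Qed.



Lemma ball_nbhs (R : realType) (T : topologicalType) (d : T -> T -> R) :
  induces_on [set: T] d -> forall x e, 0 < e -> nbhs x [set y | d x y < e].
Proof.
move=> hi x e e0; have [_ H] := hi x I [set y | d x y < e].
have [|N hN sN] := H; first by exists e => // y [].
by apply: filterS hN => y Ny; exact: sN.
Qed.

Lemma nbhs_ball (R : realType) (T : topologicalType) (d : T -> T -> R) :
  induces_on [set: T] d -> forall x (N : set T), nbhs x N ->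
  exists2 e, 0 < e & forall y, d x y < e -> N y.
Proof.
move=> hi x N hN; have [H _] := hi x I N.
have [|e e0 s] := H; first by exists N.
by exists e => // y dy; apply: s.
Qed.

Lemma proj_nbhs (T : topologicalType) (g : {ptws nat -> T}) n (B : set T) :
  nbhs (g n) B -> nbhs g [set h : {ptws nat -> T} | B (h n)].
Proof. move=> hB; exact: (@proj_continuous nat (fun _ => T) n g B hB). Qed.

Lemma compact_ptws (X : topologicalType) : compact [set: X] ->
  compact [set: {ptws nat -> X}].
Proof.
move=> hX; have := @tychonoff nat (fun _ => X) (fun _ => [set: X]) (fun _ => hX).
by have -> : [set f : nat -> X | forall i, [set: X] (f i)] = setT by apply/seteqP.
Qed.

Lemma prod_nbhs (A B : topologicalType) (a : A) (b : B) (S : set (A * B)) :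
  nbhs (a, b) S -> exists2 P, nbhs a P & exists2 Q, nbhs b Q &
    forall x y, P x -> Q y -> S (x, y).
Proof.
move=> [[P Q] /= [nP nQ] sPQ]; exists P => //; exists Q => // x y Px Qy.
exact: (sPQ (x, y)).
Qed.



Lemma d_bounded (R : realType) (X : topologicalType) (d : X -> X -> R) (xs : X) :
  metric_on [set: X] d -> induces_on [set: X] d -> compact [set: X] ->
  exists M, 0 <= M /\ forall x y, d x y <= M.
Proof.
move=> hm hi hX.
suff [M hM] : exists M, forall y, d xs y <= M.
  exists (M + M); split.
    by apply: addr_ge0; apply: le_trans (hM xs); exact: d_ge0.
  move=> x y; apply: le_trans (d_tri hm x xs y) _.
  by rewrite (d_sym hm); apply: lerD.
apply: contrapT => nb.
have ub : forall M, exists y, M < d xs y.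
  move=> M; apply: contrapT => h; apply: nb; exists M => y.
  by rewrite leNgt; apply/negP => hy; apply: h; exists y.
pose B := fun M : R => [set y | M < d xs y].
have FF : Filter (filter_from [set: R] B).
  apply: filter_fromT_filter; first by exists 0.
  move=> i j; exists (Num.max i j) => y /=; rewrite /B /= gt_max => /andP[].
  by [].
have PF : ProperFilter (filter_from [set: R] B).
  by apply: filter_from_proper => i _; have [y hy] := ub i; exists y.
have [|p [_ cp]] := hX _ PF; first by exists 0 => //.
have [y [hy1 hy2]] := cp (B (d xs p + 1)) [set y | d p y < 1]
  (ltac:(by exists (d xs p + 1))) (ball_nbhs hi p ltr01).
have := d_tri hm xs p y.
rewrite leNgt => /negP; apply.
apply: lt_trans hy1; by rewrite ltrD2l.
Qed.

Lemma ptws_hausdorff (R : realType) (X : topologicalType) (d : X -> X -> R) :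
  metric_on [set: X] d -> induces_on [set: X] d ->
  hausdorff_space {ptws nat -> X}.
Proof.
move=> hm hi p q cpq; apply: funext => n.
apply/(d_eq0 hm); apply/eqP; rewrite eq_le (d_ge0 hm) andbT.
rewrite leNgt; apply/negP => dp.
have e0 : 0 < d (p n) (q n) / 2 by rewrite divr_gt0.
have [g [g1 g2]] := cpq _ _ (proj_nbhs (ball_nbhs hi (p n) e0))
  (proj_nbhs (ball_nbhs hi (q n) e0)).
have := d_tri hm (p n) (g n) (q n).
rewrite leNgt => /negP; apply.
by rewrite (d_sym hm (g n)) [X in _ < X](splitr (d (p n) (q n))) ltrD.
Qed.



Lemma clus_fixed (R : realType) (U X : topologicalType) (d : X -> X -> R)
  (f : X -> U -> X) (Uf : {ptws nat -> U} -> {ptws nat -> X}) (u0 : {ptws nat -> U}) (p : {ptws nat -> X}) :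
  metric_on [set: X] d -> induces_on [set: X] d ->
  continuous (fun q : X * U => f q.1 q.2) ->
  (forall u, Uf u = Fmap f (Uf u) u) ->
  cluster (Uf @ nbhs u0) p -> p = Fmap f p u0.
Proof.
move=> hm hi hf hfix cp; apply: funext => n.
pose q := f (p n.+1) (u0 n).
apply/(d_eq0 hm); apply/eqP; rewrite eq_le (d_ge0 hm) andbT.
rewrite leNgt; apply/negP => dp.
have e0 : 0 < d (p n) q / 2 by rewrite divr_gt0.
have := hf (p n.+1, u0 n) _ (ball_nbhs hi q e0).
move=> /prod_nbhs [A nA [B nB sAB]].
have nW : nbhs p ([set g : {ptws nat -> X} | d (p n) (g n) < d (p n) q / 2] `&`
                  [set g : {ptws nat -> X} | A (g n.+1)]).
  by apply: filterI; [exact: (proj_nbhs (ball_nbhs hi (p n) e0)) | exact: proj_nbhs].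
have GS : (Uf @ nbhs u0) (Uf @` [set u : {ptws nat -> U} | B (u n)]).
  rewrite /= /fmap; apply: filterS (proj_nbhs nB) => u Bu; by exists u.
have [g [[u Bu <-] [h1 h2]]] := cp _ _ GS nW.
have fu : Uf u n = f (Uf u n.+1) (u n) by rewrite {1}hfix.
have h3 := sAB _ _ h2 Bu; rewrite /= -fu in h3.
have := d_tri hm (p n) (Uf u n) q.
rewrite leNgt => /negP; apply.
by rewrite (d_sym hm (Uf u n)) [X in _ < X](splitr (d (p n) q)) ltrD.
Qed.

Lemma Uf_cvg (R : realType) (U X : topologicalType) (d : X -> X -> R)
  (f : X -> U -> X) (Uf : {ptws nat -> U} -> {ptws nat -> X}) (u0 : {ptws nat -> U}) :
  metric_on [set: X] d -> induces_on [set: X] d -> compact [set: X] ->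
  continuous (fun q : X * U => f q.1 q.2) ->
  (forall u, Uf u = Fmap f (Uf u) u) ->
  (forall u x, x = Fmap f x u -> x = Uf u) ->
  Uf @ nbhs u0 --> Uf u0.
Proof.
move=> hm hi hX hf hfix hun.
have cX := compact_ptws hX.
have PF : ProperFilter (Uf @ nbhs u0) by exact: fmap_proper_filter.
have sub : cluster (Uf @ nbhs u0) `<=` [set Uf u0].
  by move=> p cp; apply: hun; exact: (clus_fixed hm hi hf hfix cp).
apply: (@compact_cluster_set1 _ (Uf u0) (Uf @ nbhs u0) setT
  (ptws_hausdorff hm hi) cX filterT PF filterT).
apply/seteqP; split => // p /= ->.
have [q [_ cq]] := cX (Uf @ nbhs u0) PF filterT.
by rewrite -(sub q cq).
Qed.



Lemma case1_cont (R : realType) (U X : topologicalType) (d : X -> X -> R)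
  (w : nat -> R) (Uf : {ptws nat -> U} -> {ptws nat -> X}) (u0 : {ptws nat -> U}) M e :
  metric_on [set: X] d -> induces_on [set: X] d -> (forall n, 0 < w n) ->
  series w @ \oo --> (1 : R) -> 0 <= M -> (forall x y, d x y <= M) ->
  Uf @ nbhs u0 --> Uf u0 -> 0 < e ->
  \forall u \near u0, dXbar w d (Uf u) (Uf u0) < e.
Proof.
move=> hm hi w0 hw M0 dM hcv e0.
pose t := e / (4 * (M + 1)).
have M1 : 0 < M + 1 by rewrite ltr_wpDl.
have t0 : 0 < t by rewrite /t divr_gt0 // mulr_gt0.
have [N0 _ HN0] := @cvgr_gt R _ _ _ _ _ hw (1 - t) ltac:(by rewrite ltrBlDr ltrDl).
have hN0 : 1 - t < series w N0 by apply: HN0 => /=.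
have e2 : 0 < e / 2 by rewrite divr_gt0.
have nr := @filter_forall {ptws nat -> U} 'I_N0
    (fun (i : 'I_N0) (u : {ptws nat -> U}) => d (Uf u0 i) (Uf u i) < e / 2) (nbhs u0) (@nbhs_filter _ u0)
    (fun i => hcv _ (proj_nbhs (ball_nbhs hi (Uf u0 i) e2))).
apply: filterS nr => u hu.
have Mt : M * t <= e / 4.
  have -> : M * t = e / 4 * (M / (M + 1)).
    by rewrite /t; field; rewrite lt0r_neq0.
  rewrite -[leRHS]mulr1; apply: ler_wpM2l; first by rewrite divr_ge0 // ltW.
  by rewrite ler_pdivrMr // mul1r lerDl.
apply: (@le_lt_trans _ _ (e / 2 + e / 4)); last first.
  lra.
apply: D_le => // N.
apply: le_trans (PS_nd (Uf u) (Uf u0) hm w0 (leq_addl N0 N)) _.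
rewrite /PS /series /= (@big_cat_nat _ _ _ N0) ?leq_addr //=.
apply: lerD.
  apply: (@le_trans _ _ (\sum_(0 <= i < N0) w i * (e / 2))).
    rewrite big_nat_cond [leRHS]big_nat_cond; apply: ler_sum => i /andP[/andP[_ iN] _].
    apply: ler_wpM2l; first exact: ltW.
    rewrite (d_sym hm); apply: ltW; exact: (hu (Ordinal iN)).
  rewrite -mulr_suml -[leRHS]mul1r; apply: ler_wpM2r; first exact: ltW.
  exact: (w_sum_le1 w0 hw).
apply: (@le_trans _ _ (\sum_(N0 <= i < N0 + N) w i * M)).
  apply: ler_sum => i _; apply: ler_wpM2l; [exact: ltW | exact: dM].
rewrite -mulr_suml mulrC; apply: le_trans Mt; apply: ler_wpM2l => //.
have := w_sum_le1 w0 hw (N0 + N).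
rewrite /series /= (@big_cat_nat _ _ _ N0) ?leq_addr //= => h.
rewrite /series /= in hN0.
lra.
Qed.


Unset Implicit Arguments. Set Strict Implicit.

Theorem lemmaB6 (R : realType) (Z U X : topologicalType)
  (d : X -> X -> R) (f : X -> U -> X)
  (V : {ptws nat -> Z} -> {ptws nat -> U})
  (w : nat -> R) (xs : X) :
  (* Z, U Polish; (X, d) Polish with complete metric d *)
  polish R Z -> polish R U ->
  metric_on [set: X] d -> induces_on [set: X] d -> complete_on [set: X] d ->
  separable_on [set: X] ->
  (* f continuous *)
  continuous (fun p : X * U => f p.1 p.2) ->
  (* V continuous and causal; underline U = V(underline Z) Polish *)
  continuous V -> causal V -> polish_on R (range V) ->
  (* the weights *)
  (forall n, 0 < w n < 1) ->
  ((forall n, w n.+1 <= w n) \/ (forall n, w n <= w n.+1)) ->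
  series w @ \oo --> (1 : R) ->
  wnorm_finite w ->
  (* standing assumption: F maps Xbar x Ubar into Xbar, continuously *)
  (forall x u, in_Xbar w d xs x -> range V u -> in_Xbar w d xs (Fmap f x u)) ->
  (forall x0 u0, in_Xbar w d xs x0 -> range V u0 ->
     forall e : R, 0 < e -> exists2 delta : R, 0 < delta &
       \forall u \near u0, forall x, in_Xbar w d xs x ->
         dXbar w d x x0 < delta -> range V u ->
         dXbar w d (Fmap f x u) (Fmap f x0 u0) < e) ->
  (* case (i) or case (ii) *)
  ((compact [set: X] /\
    forall u : nat -> U, exists! x : nat -> X, forall n, x n = f (x n.+1) (u n))
   \/
   (exists c : R, 0 < c < (wnorm w)^-1 /\
      forall x1 x2 u, d (f x1 u) (f x2 u) <= c * d x1 x2)) ->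
  (* conclusion: U_f : Ubar -> Xbar exists (unique solution in Xbar) and is
     continuous *)
  exists Uf : {ptws nat -> U} -> (nat -> X),
    (forall u, range V u ->
       [/\ in_Xbar w d xs (Uf u),
           Uf u = Fmap f (Uf u) u
         & forall x, in_Xbar w d xs x -> x = Fmap f x u -> x = Uf u]) /\
    (forall u0, range V u0 -> forall e : R, 0 < e ->
       \forall u \near u0, range V u -> dXbar w d (Uf u) (Uf u0) < e).
Proof.
move=> PZ PU hm hi hc hsep hf hV hcaus hpol w01 wmono hw wfin hF hFc.
have w0 : forall n, 0 < w n by move=> n; have /andP[] := w01 n.
case=> [[hX hesp] | [c [/andP[c0 cL] hcon]]].
- have /choice [Uf0 hUf] := hesp.
  have hfix : forall u, Uf0 u = Fmap f (Uf0 u) u.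
    by move=> u; apply: funext => n; have [h _] := hUf u; exact: h.
  have huniq : forall u x, x = Fmap f x u -> x = Uf0 u.
    move=> u x ex; have [_ h] := hUf u; apply/esym/h => n.
    by rewrite {1}ex.
  have [M [M0 dM]] := d_bounded xs hm hi hX.
  have Xall : forall x, in_Xbar w d xs x.
    move=> x; apply/(Xbar_bnd _ _ hm w0); exists M => N.
    apply: (@le_trans _ _ (\sum_(0 <= i < N) w i * M)).
      apply: ler_sum => i _; apply: ler_wpM2l; [exact: ltW | exact: dM].
    rewrite -mulr_suml -[leRHS]mul1r; apply: ler_wpM2r => //.
    exact: (w_sum_le1 w0 hw).
  exists Uf0; split.
    by move=> u _; split => // x _ ex; exact: huniq.
  move=> u0 _ e e0.
  have hcv := @Uf_cvg R U X d f (Uf0 : {ptws nat -> U} -> {ptws nat -> X}) u0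
    hm hi hX hf hfix huniq.
  have := case1_cont hm hi w0 hw M0 dM hcv e0.
  by apply: filterS => u h _.
- have [L0 wL] := wnorm_ratio w0 wfin.
  have lam1 : c * wnorm w < 1.
    have : c < 1 / wnorm w by rewrite div1r.
    by rewrite ltr_pdivlMr.
  have c0' : 0 <= c by exact: ltW.
  have L0' : 0 <= wnorm w by exact: ltW.
  have ex : forall u : {ptws nat -> U}, exists x : nat -> X, range V u ->
      [/\ in_Xbar w d xs x, x = Fmap f x u
        & forall y, in_Xbar w d xs y -> y = Fmap f y u -> y = x].
    move=> u; have [hu|hu] := pselect (range V u); last first.
      by exists (fun=> xs).
    have [x [Xx fx]] := @fp_exists R X U d f w xs c (wnorm w) u hm hc w0 c0' L0'
      lam1 wL hcon (fun x hx => hF x u hx hu).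
    exists x => _; split => // y Xy fy.
    exact: (@fp_unique R X U d f w xs c (wnorm w) u y x hm w0 c0' L0' lam1 wL hcon Xy Xx fy fx).
  have /choice [Uf0 hUf] := ex.
  exists Uf0; split.
    by move=> u hu; exact: hUf.
  move=> u0 hu0 e e0.
  have [X0 fx0 _] := hUf u0 hu0.
  have lam1' : 0 < 1 - c * wnorm w by rewrite subr_gt0.
  have e'0 : 0 < e * (1 - c * wnorm w) / 2 by rewrite divr_gt0 // mulr_gt0.
  have [delta d0 hnear] := hFc (Uf0 u0) u0 X0 hu0 _ e'0.
  apply: filterS hnear => u hn hu.
  have [Xu fu _] := hUf u hu.
  have h := hn (Uf0 u0) X0 (ltac:(by rewrite (D_xx _ hm w0))) hu.
  have := @fp_cont R X U d f w xs c (wnorm w) u u0 (Uf0 u) (Uf0 u0) _ hm w0 c0' L0'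
    lam1 wL hcon Xu X0 (hF _ _ X0 hu) fu fx0 h.
  move=> /le_lt_trans; apply.
  rewrite mulrAC mulfK ?lt0r_neq0 //.
  lra.
Qed.
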